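(* Let $(X_n)_{n\ge1}$ be a sequence of finite sets and $(a_n(q))$ a $q$-Euler–Gauss sequence. Let $n\ge1$ be such that $a_d(1)\neq0$ for every divisor $d$ of $n$ for which $n/d$ is not a prime power. If $|X_d|=a_d(1)$ for all $d\mid n$ and $\mathbb{Z}_n$ acts on $X_n$ so that $|X_n^i|=|X_{\gcd(n,i)}|$ for all $i\in\mathbb{Z}_n$, then the triple $(X_n,\mathbb{Z}_n,a_n(q))$ exhibits the cyclic sieving phenomenon.
   Context: $\mu$ is the Möbius function, $[n]_q=1+q+\dots+q^{n-1}$; polynomial congruences modulo $[n]_q$ mean divisibility of the difference by $[n]_q$ in $\mathbb{Z}[q]$. A sequence $(a_n(q))$ in $\mathbb{Z}[q]$ is a $q$-Euler–Gauss sequence if for all $n\ge1$, $\prod_{d\mid n,\,\mu(d)=1}a_{n/d}(q^d)\equiv\prod_{d\mid n,\,\mu(d)=-1}a_{n/d}(q^d)\pmod{[n]_q}$. Here ''$n/d$ is not a prime power'' means $n/d$ has at least two distinct prime divisors ($1=p^0$ counts as a prime power). $\mathbb{Z}_n$ is the additive group of integers mod $n$, elements $i$ identified with integer representatives; $X_n^i$ is the fixed point set of $i$. A triple $(X,\mathbb{Z}_n,f(q))$ exhibits the cyclic sieving phenomenon if $|X^i|=f(\omega_n^i)$ for all $i\in\mathbb{Z}_n$, where $\omega_n$ is a primitive $n$-th root of unity. *)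

(* Defs.v *)
From HB Require Import structures.
From mathcomp Require Import all_boot all_order all_algebra all_field.
Set Implicit Arguments. Unset Strict Implicit. Unset Printing Implicit Defensive.
Import Order.TTheory GRing.Theory Num.Theory.
Local Open Scope ring_scope.

(* Moebius function (value at 0 is irrelevant; set to 0). *)
Definition moebius (n : nat) : int :=
  if n is 0 then 0
  else if all (fun p => logn p n == 1)%N (primes n)
       then (-1) ^+ size (primes n) else 0.

Definition qint (n : nat) : {poly int} := \sum_(i < n) 'X^i.

Definition poly_congr (P Q m : {poly int}) : Prop :=
  exists c : {poly int}, P - Q = c * m.

Definition qEulerGauss (a : nat -> {poly int}) : Prop :=
  forall n : nat, (0 < n)%N ->
    poly_congr
      (\prod_(d <- divisors n | moebius d == 1) ((a (n %/ d)%N) \Po 'X^d))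
      (\prod_(d <- divisors n | moebius d == -1) ((a (n %/ d)%N) \Po 'X^d))
      (qint n).

Definition not_prime_power (m : nat) : bool := (1 < size (primes m))%N.

(* A Z_n-action on T, given as a Z-action that factors through Z_n:
   act i is the action of the class of i. *)
Definition is_Zn_action (n : nat) (T : finType) (act : nat -> T -> T) : Prop :=
  [/\ forall x, act 0%N x = x,
      forall i j x, act (i + j)%N x = act i (act j x)
    & forall x, act n x = x].

Definition fixpts (T : finType) (act : nat -> T -> T) (i : nat) : {set T} :=
  [set x | act i x == x].

Definition CSP (n : nat) (T : finType) (act : nat -> T -> T) (f : {poly int})
  (w : algC) : Prop :=
  forall i : nat, (i < n)%N ->
    (#|fixpts act i|)%:R = (map_poly intr f).[w ^+ i].

(* Main.v *)
Require Import Defs.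
From HB Require Import structures.
From mathcomp Require Import all_boot all_order all_algebra all_field.
Import Order.TTheory GRing.Theory Num.Theory.
Local Open Scope ring_scope.

Definition ev (P : {poly int}) (z : algC) : algC := (map_poly intr P).[z].

Lemma ev_comp P d z : ev (P \Po 'X^d) z = ev P (z ^+ d).
Proof. by rewrite /ev map_comp_poly horner_comp map_polyXn hornerXn. Qed.

Lemma ev_prod (I : Type) (r : seq I) (Pr : pred I) (F : I -> {poly int}) z :
  ev (\prod_(i <- r | Pr i) F i) z = \prod_(i <- r | Pr i) ev (F i) z.
Proof. by rewrite /ev rmorph_prod horner_prod. Qed.

Lemma ev1 P : ev P 1 = (P.[1])%:~R.
Proof. by rewrite /ev -(rmorph1 (intr : int -> algC)) horner_map. Qed.

Lemma evB P Q z : ev (P - Q) z = ev P z - ev Q z.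
Proof. by rewrite /ev rmorphB hornerD hornerN. Qed.

Lemma evM P Q z : ev (P * Q) z = ev P z * ev Q z.
Proof. by rewrite /ev rmorphM hornerM. Qed.

Lemma ev_qint N z : z ^+ N = 1 -> z != 1 -> ev (qint N) z = 0.
Proof.
move=> zN z1; rewrite /ev /qint rmorph_sum horner_sum.
have : (z - 1) * \sum_(i < N) z ^+ i = 0 by rewrite -subrX1 zN subrr.
move/eqP; rewrite mulf_eq0 subr_eq0 (negPf z1) /= => /eqP H.
apply: etrans H; apply: eq_bigr => i _; by rewrite map_polyXn hornerXn.
Qed.

Lemma moebiusE n : (0 < n)%N -> moebius n =
  if all (fun p => logn p n == 1)%N (primes n)
       then (-1) ^+ size (primes n) else 0.
Proof. by case: n. Qed.

Lemma moebius_neq0 x : moebius x != 0 ->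
  (0 < x)%N /\ forall p, p \in primes x -> logn p x = 1%N.
Proof.
case: x => [|x]; first by rewrite eqxx.
rewrite /moebius; case: ifP => [/allP H _|]; last by rewrite eqxx.
by split=> // p /H /eqP.
Qed.

Lemma moebius_sq p x : prime p -> moebius x != 0 -> ~~ (p * p %| x)%N.
Proof.
move=> pp /moebius_neq0 [x0 H]; apply/negP => dv.
have px : p \in primes x.
  by rewrite mem_primes pp x0 (dvdn_trans (dvdn_mulr p (dvdnn p)) dv).
have := H p px.
have : (2 <= logn p x)%N by rewrite -pfactor_dvdn // expnS expn1.
by move=> h e; rewrite e in h.
Qed.

Lemma moebiusMp p d : prime p -> (0 < d)%N -> ~~ (p %| d)%N ->
  moebius (d * p) = - moebius d.
Proof.
move=> pp d0 npd.
have p0 := prime_gt0 pp.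
have dp0 : (0 < d * p)%N by rewrite muln_gt0 d0 p0.
have pnd : p \notin primes d by rewrite mem_primes pp d0 (negPf npd) andbF.
have hperm : perm_eq (primes (d * p)) (p :: primes d).
  apply: uniq_perm.
  - exact: primes_uniq.
  - by rewrite /= primes_uniq pnd.
  by move=> q; rewrite primesM // (primes_prime pp) in_cons in_nil orbF orbC.
have lp : logn p (d * p) = 1%N.
  by rewrite lognM // logn_coprime ?prime_coprime // (logn_prime p pp) eqxx.
have lq : {in primes d, forall q, logn q (d * p) = logn q d}.
  move=> q qd; have qp : q != p by apply: contraNneq pnd => <-.
  by rewrite lognM // (logn_prime q pp) (negPf qp) addn0.
rewrite !moebiusE // (perm_all _ hperm) (perm_size hperm) /= lp eqxx /=.
rewrite (@eq_in_all _ _ (fun q => logn q d == 1)%N); last first.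
  by move=> q qd /=; rewrite lq.
by case: ifP => _; rewrite ?exprS ?mulN1r ?oppr0.
Qed.

Definition npp_dvd x y : not_prime_power x -> (x %| y)%N -> (0 < y)%N ->
  not_prime_power y.
Proof.
rewrite /not_prime_power => h xy y0; apply: leq_trans h _.
apply: uniq_leq_size; first exact: primes_uniq.
move=> q; rewrite !mem_primes => /and3P [-> x0 qx].
by rewrite y0 (dvdn_trans qx xy).
Qed.

Lemma dvd_gt0 d N : (0 < N)%N -> (d %| N)%N -> (0 < d)%N.
Proof. by case: d => // /[swap]; rewrite dvd0n => /eqP ->. Qed.

Lemma reindex_p (F : nat -> algC) N p (s : int) :
  (0 < N)%N -> prime p -> (p %| N)%N -> s != 0 ->
  \prod_(d <- divisors N | (moebius d == s) && (p %| d)%N) F d =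
  \prod_(d <- divisors N | (moebius d == - s) && ~~ (p %| d)%N) F (d * p)%N.
Proof.
move=> N0 pp pN s0.
have p0 := prime_gt0 pp.
rewrite -big_filter -[RHS]big_filter -(big_map (fun d => d * p)%N xpredT F).
apply: perm_big; apply: uniq_perm.
- by rewrite filter_uniq // divisors_uniq.
- rewrite map_inj_uniq ?filter_uniq ?divisors_uniq //.
  by move=> x y /eqP; rewrite eqn_pmul2r // => /eqP.
move=> x; rewrite mem_filter -dvdn_divisors //; apply/andP/mapP.
- case=> /andP [/eqP mx px] xN.
  have x0 : (0 < x)%N by apply: dvd_gt0 N0 xN.
  have ndp : ~~ (p %| x %/ p)%N.
    by rewrite dvdn_divRL // moebius_sq // mx.
  have xp0 : (0 < x %/ p)%N by rewrite divn_gt0 // dvdn_leq.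
  exists (x %/ p)%N; last by rewrite divnK.
  rewrite mem_filter -dvdn_divisors // ndp andbT (dvdn_trans (dvdn_div px) xN).
  have := @moebiusMp p _ pp xp0 ndp; rewrite divnK // mx => ->.
  by rewrite opprK eqxx.
- case=> d; rewrite mem_filter -dvdn_divisors // => /andP [/andP [/eqP md npd] dN] ->.
  have d0 : (0 < d)%N by apply: dvd_gt0 N0 dN.
  rewrite moebiusMp // md opprK eqxx dvdn_mull //=.
  by rewrite Gauss_dvd ?dN ?pN // coprime_sym prime_coprime.
Qed.

Lemma lcm_eq d m : (0 < d)%N -> lcmn d m = (d * (m %/ gcdn d m))%N.
Proof. by move=> d0; rewrite /lcmn muln_divA // dvdn_gcdr. Qed.

Lemma lcm_coprimeM d p m : coprime d p -> (p %| m)%N ->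
  lcmn (d * p) m = lcmn d m.
Proof.
move=> cdp pm.
have -> : (d * p)%N = lcmn d p.
  by have := muln_lcm_gcd d p; rewrite (eqP cdp) muln1.
by rewrite -lcmnA (lcmn_idPr pm).
Qed.

Lemma alg_rearr (x y u v : algC) : x * u * v = v * (y * u) -> x * v * u = y * v * u.
Proof. by move=> E; rewrite mulrAC E mulrC mulrAC. Qed.

Lemma key (a : nat -> {poly int}) : qEulerGauss a ->
  forall N, (0 < N)%N ->
  (forall d, (d %| N)%N -> not_prime_power (N %/ d) -> (a d).[1] != 0) ->
  forall m z, (m %| N)%N -> m.-primitive_root z ->
  ev (a N) z = ((a (N %/ m)%N).[1])%:~R.
Proof.
move=> EG N; elim/ltn_ind: N => N IH N0 W m z mN zp.
have m0 := prim_order_gt0 zp.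
case: (ltngtP m 1) => [|m1|m1]; first by rewrite ltnS leqn0 => /eqP m00; rewrite m00 in m0.
  2: by move: zp; rewrite m1 => zp; have := prim_expr_order zp; rewrite expr1 => ->; rewrite ev1 divn1.
set c := fun k => ((a k).[1])%:~R : algC.
set F := fun d => ev (a (N %/ d)%N) (z ^+ d).
set p := pdiv m.
have pp : prime p by apply: pdiv_prime.
have pm : (p %| m)%N by apply: pdiv_dvd.
have pN : (p %| N)%N by apply: dvdn_trans pm mN.
have p0 := prime_gt0 pp.
have hF : forall d, (d %| N)%N -> (1 < d)%N -> F d = c (N %/ lcmn d m)%N.
  move=> d dN d1.
  have d0 : (0 < d)%N by apply: ltnW.
  have LN : (lcmn d m %| N)%N by rewrite dvdn_lcm dN mN.
  have Nd : (N %/ d < N)%N by apply: ltn_Pdiv.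
  have Nd0 : (0 < N %/ d)%N by rewrite divn_gt0 // dvdn_leq.
  rewrite /F (IH _ Nd Nd0 _ (m %/ gcdn d m)%N _ _ (exp_prim_root zp d)).
  - by rewrite /c -divnMA -lcm_eq.
  - move=> d' d'N np.
    have d'N' : (d' %| N)%N by apply: dvdn_trans d'N (dvdn_div dN).
    apply: W => //.
    apply: npp_dvd np _ _.
      rewrite -divnMA (mulnC d d') divnMA; apply: dvdn_div.
      by rewrite (dvdn_divRL _ d'N') mulnC -(dvdn_divRL _ dN).
    have d'0 : (0 < d')%N by apply: dvd_gt0 N0 d'N'.
    by rewrite divn_gt0 // dvdn_leq.
  by rewrite (dvdn_divRL _ dN) mulnC -lcm_eq.
have hFnz : forall d, (d %| N)%N -> (1 < d)%N -> ~~ (p %| d)%N -> F d != 0.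
  move=> d dN d1 npd; rewrite hF // /c intr_eq0.
  have LN : (lcmn d m %| N)%N by rewrite dvdn_lcm dN mN.
  have L0 : (0 < lcmn d m)%N by rewrite lcmn_gt0 m0 ltnW.
  apply: W; first exact: dvdn_div LN.
  rewrite divnA // mulKn //.
  set q := pdiv d.
  have qp : prime q by apply: pdiv_prime.
  have qd : (q %| d)%N by apply: pdiv_dvd.
  have qnp : q != p by apply: contraNneq npd => <-.
  rewrite /not_prime_power.
  apply: (@leq_trans (size [:: q; p])) => //.
  apply: uniq_leq_size; first by rewrite /= inE qnp.
  move=> r; rewrite !inE => /orP [] /eqP ->; rewrite mem_primes ?qp ?pp L0 /=.
    exact: dvdn_trans qd (dvdn_lcml d m).
  exact: dvdn_trans pm (dvdn_lcmr d m).
have hFp : forall d, (d %| N)%N -> (1 < d)%N -> ~~ (p %| d)%N -> F (d * p)%N = F d.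
  move=> d dN d1 npd.
  have cdp : coprime d p by rewrite coprime_sym prime_coprime.
  have dpN : (d * p %| N)%N by rewrite Gauss_dvd // dN pN.
  rewrite !hF // ?lcm_coprimeM //.
  by rewrite (leq_trans d1) // leq_pmulr.
have hF1 : F 1%N = ev (a N) z by rewrite /F divn1 expr1.
have hFp1 : F p = c (N %/ m)%N by rewrite hF ?prime_gt1 // (lcmn_idPr pm).
have z1 : z != 1.
  apply/negP => /eqP z1; have := prim_order_dvd zp 1.
  by rewrite z1 expr1 eqxx dvdn1 => /eqP m11; rewrite m11 in m1.
have zN : z ^+ N = 1.
  by case/dvdnP: mN => k ->; rewrite mulnC exprM (prim_expr_order zp) expr1n.
have E : \prod_(d <- divisors N | moebius d == 1) F d =
         \prod_(d <- divisors N | moebius d == -1) F d.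
  have [Q HQ] := EG N N0.
  have := congr1 (fun P => ev P z) HQ; rewrite /= evB evM ev_qint // mulr0 => /eqP.
  rewrite subr_eq0 !ev_prod => /eqP H.
  have eqL : forall s, \prod_(d <- divisors N | moebius d == s) F d =
     \prod_(d <- divisors N | moebius d == s) ev (a (N %/ d)%N \Po 'X^d) z.
    by move=> s; apply: eq_bigr => d _; rewrite ev_comp.
  by rewrite !eqL.
have split : forall s : int, s != 0 ->
   \prod_(d <- divisors N | moebius d == s) F d =
   \prod_(d <- divisors N | (moebius d == s) && ~~ (p %| d)%N) F d *
   \prod_(d <- divisors N | (moebius d == - s) && ~~ (p %| d)%N) F (d * p)%N.
  by move=> s s0; rewrite (bigID (fun d => p %| d)%N) /= mulrC reindex_p.
rewrite !split ?oner_eq0 ?oppr_eq0 ?oner_eq0 // opprK in E.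
have mu1 : moebius 1 = 1 by [].
have ex1 : forall G : nat -> algC,
    \prod_(d <- divisors N | (moebius d == 1) && ~~ (p %| d)%N) G d =
    G 1%N * \prod_(d <- divisors N | ((moebius d == 1) && ~~ (p %| d)%N) && (d != 1%N)) G d.
  move=> G; rewrite -big_filter (bigD1_seq 1%N) ?filter_uniq ?divisors_uniq //.
    by rewrite big_filter_cond.
  by rewrite mem_filter divisor1 andbT mu1 eqxx Euclid_dvd1.
have gt1 : forall d, d \in divisors N -> d != 1%N -> (1 < d)%N.
  move=> d dD d1; rewrite -dvdn_divisors // in dD.
  by rewrite ltn_neqAle eq_sym d1 (@dvd_gt0 d N N0 dD).
have eqA : \prod_(d <- divisors N | ((moebius d == 1) && ~~ (p %| d)%N) && (d != 1%N)) F (d * p)%N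
         = \prod_(d <- divisors N | ((moebius d == 1) && ~~ (p %| d)%N) && (d != 1%N)) F d.
  rewrite big_seq_cond [RHS]big_seq_cond; apply: eq_bigr => d /andP [dD /andP [/andP [_ npd] d1]].
  by apply: hFp; rewrite ?gt1 // dvdn_divisors.
have eqM : \prod_(d <- divisors N | (moebius d == -1) && ~~ (p %| d)%N) F (d * p)%N
         = \prod_(d <- divisors N | (moebius d == -1) && ~~ (p %| d)%N) F d.
  rewrite big_seq_cond [RHS]big_seq_cond; apply: eq_bigr => d /andP [dD /andP [/eqP md npd]].
  have d1 : d != 1%N by apply/eqP => d1; rewrite d1 mu1 in md.
  by apply: hFp; rewrite ?gt1 // dvdn_divisors.
have nzA : \prod_(d <- divisors N | ((moebius d == 1) && ~~ (p %| d)%N) && (d != 1%N)) F d != 0.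
  rewrite prodf_seq_neq0; apply/allP => d dD; apply/implyP => /andP [/andP [_ npd] d1].
  by apply: hFnz; rewrite ?gt1 // dvdn_divisors.
have nzM : \prod_(d <- divisors N | (moebius d == -1) && ~~ (p %| d)%N) F d != 0.
  rewrite prodf_seq_neq0; apply/allP => d dD; apply/implyP => /andP [/eqP md npd].
  have d1 : d != 1%N by apply/eqP => d1; rewrite d1 mu1 in md.
  by apply: hFnz; rewrite ?gt1 // dvdn_divisors.
rewrite (ex1 F) (ex1 (fun d => F (d * p)%N)) eqA eqM /= mul1n hF1 hFp1 in E.
apply: (mulIf nzM); apply: (mulIf nzA).
exact: alg_rearr E.
Qed.
Theorem corollary2 (X : nat -> finType) (a : nat -> {poly int}) (n : nat)
  (act : nat -> X n -> X n) :
  qEulerGauss a ->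
  (0 < n)%N ->
  (forall d : nat, (d %| n)%N -> not_prime_power (n %/ d) -> (a d).[1] != 0) ->
  (forall d : nat, (d %| n)%N -> (#|X d|)%:Z = (a d).[1]) ->
  is_Zn_action n act ->
  (forall i : nat, (i < n)%N -> #|fixpts act i| = #|X (gcdn n i)|) ->
  forall w : algC, n.-primitive_root w -> CSP n act (a n) w.
Proof.
move=> EG n0 W hX _ hfix w wp i ilt.
rewrite hfix // -/(ev (a n) (w ^+ i)).
have gn : (gcdn i n %| n)%N by apply: dvdn_gcdr.
rewrite (@key a EG n n0 W _ _ (dvdn_div gn) (exp_prim_root wp i)).
rewrite divnA // mulKn // gcdnC -hX ?dvdn_gcdl //.
Qed.
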